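(* Let $\mathrm{M}=\langle e_1+I,\ e_2+I,\ A\rangle$, where $e_1,e_2$ are the standard basis vectors of $E^2$ and $A=\mathrm{diag}(1,-1)$. Then $$N_A(\mathrm{M})=\{b+B : 2b_2\in\mathbb Z \text{ and } B\in\langle -I, A\rangle\},$$ where $b=(b_1,b_2)$.
   Context: Affine maps of $E^2$ are written $b+B$ (meaning $x\mapsto b+Bx$, $b\in E^2$, $B\in\mathrm{GL}(2,\mathbb R)$); $b+I$ is translation by $b$. $N_A(\mathrm{M})$ denotes the normalizer of $\mathrm{M}$ in the group of affine transformations of $E^2$. (Here $E^2/\mathrm{M}$ is an annulus.) *)

(* Defs.v *)
From HB Require Import structures.
From mathcomp Require Import all_boot all_order all_algebra.
From mathcomp Require Import reals.
Set Implicit Arguments. Unset Strict Implicit. Unset Printing Implicit Defensive.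
Import Order.TTheory GRing.Theory Num.Theory.
Local Open Scope ring_scope.

Section Affine.
Variable R : realType.

(* an affine map b + B : x |-> b + B x, represented by the pair (b, B) *)
Definition aff := ('cV[R]_2 * 'M[R]_2)%type.

Definition is_affine (f : aff) : Prop := f.2 \in unitmx.

Definition aff_comp (f g : aff) : aff := (f.1 + f.2 *m g.1, f.2 *m g.2).
Definition aff_inv (f : aff) : aff := (- (invmx f.2 *m f.1), invmx f.2).
Definition aff_id : aff := (0, 1%:M).

Inductive aff_gen (S : aff -> Prop) : aff -> Prop :=
| ag_id : aff_gen S aff_id
| ag_base f : S f -> aff_gen S f
| ag_comp f g : aff_gen S f -> aff_gen S g -> aff_gen S (aff_comp f g)
| ag_inv f : aff_gen S f -> aff_gen S (aff_inv f).

Inductive mx_gen (S : 'M[R]_2 -> Prop) : 'M[R]_2 -> Prop :=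
| mg_id : mx_gen S 1%:M
| mg_base B : S B -> mx_gen S B
| mg_mul B C : mx_gen S B -> mx_gen S C -> mx_gen S (B *m C)
| mg_inv B : mx_gen S B -> mx_gen S (invmx B).

Definition aff_conj (f g : aff) : aff := aff_comp (aff_comp f g) (aff_inv f).

Definition in_normalizer (G : aff -> Prop) (f : aff) : Prop :=
  is_affine f /\
  (forall g, G g -> G (aff_conj f g)) /\
  (forall g, G g -> exists h, G h /\ g = aff_conj f h).

Definition e1 : 'cV[R]_2 := delta_mx 0 0.
Definition e2 : 'cV[R]_2 := delta_mx 1 0.
Definition Amx : 'M[R]_2 := diag_mx (\row_(i < 2) (if i == 0 then 1 else -1)).

Definition Mgens (f : aff) : Prop :=
  f = (e1, 1%:M) \/ f = (e2, 1%:M) \/ f = (0, Amx).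
Definition Mgrp : aff -> Prop := aff_gen Mgens.

Definition LinGens (B : 'M[R]_2) : Prop := B = - 1%:M \/ B = Amx.

End Affine.

(* Main.v *)
Require Import Defs.
From HB Require Import structures.
From mathcomp Require Import all_boot all_order all_algebra.
From mathcomp Require Import reals.
From mathcomp Require Import lra ring.
Import Order.TTheory GRing.Theory Num.Theory.
Local Open Scope ring_scope.

Section S.
Variable R : realType.

Lemma mx2E (M N : 'M[R]_2) : M 0 0 = N 0 0 -> M 0 1 = N 0 1 -> M 1 0 = N 1 0 -> M 1 1 = N 1 1 -> M = N.
Proof.
move=> h00 h01 h10 h11; apply/matrixP=> i j.
case: i => [[|[|//]] Hi]; case: j => [[|[|//]] Hj].
- have -> : Ordinal Hi = 0 by apply/val_inj.
  have -> : Ordinal Hj = 0 by apply/val_inj.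
  exact: h00.
- have -> : Ordinal Hi = 0 by apply/val_inj.
  have -> : Ordinal Hj = 1 by apply/val_inj.
  exact: h01.
- have -> : Ordinal Hi = 1 by apply/val_inj.
  have -> : Ordinal Hj = 0 by apply/val_inj.
  exact: h10.
- have -> : Ordinal Hi = 1 by apply/val_inj.
  have -> : Ordinal Hj = 1 by apply/val_inj.
  exact: h11.
Qed.

Lemma col2E (M N : 'cV[R]_2) : M 0 0 = N 0 0 -> M 1 0 = N 1 0 -> M = N.
Proof.
move=> h0 h1; apply/matrixP=> i j.
have -> : j = 0 by apply/val_inj; case: j => [[|//] ?].
case: i => [[|[|//]] Hi].
- have -> : Ordinal Hi = 0 by apply/val_inj.
  exact: h0.
- have -> : Ordinal Hi = 1 by apply/val_inj.
  exact: h1.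
Qed.

Lemma mulE (m n : nat) (M : 'M[R]_(m,2)) (N : 'M[R]_(2,n)) i j :
  (M *m N) i j = M i 0 * N 0 j + M i 1 * N 1 j.
Proof.
rewrite mxE !big_ord_recl big_ord0 addr0.
have -> : lift ord0 ord0 = 1 :> 'I_2 by apply/val_inj.
by [].
Qed.

Lemma o10 : (1 == 0 :> 'I_2) = false. Proof. by apply/eqP => /(congr1 val). Qed.
Lemma o01 : (0 == 1 :> 'I_2) = false. Proof. by apply/eqP => /(congr1 val). Qed.
Lemma o00 : (0 == 0 :> 'I_2) = true. Proof. exact: eqxx. Qed.
Lemma o11 : (1 == 1 :> 'I_2) = true. Proof. exact: eqxx. Qed.
Lemma o00' : (0 == 0 :> 'I_1) = true. Proof. exact: eqxx. Qed.
Definition ordE := (o10, o01, o00, o11, o00').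

Ltac simp := try unfold e1; try unfold e2; try unfold Amx;
  rewrite ?(mulE, mxE) ?ordE /= ?mulr1n ?mulr0n ?mulr1 ?mulr0 ?mul1r ?mul0r ?addr0 ?add0r ?mulN1r ?mulNr ?mulrN ?opprK ?oppr0.

Lemma AA : Amx R *m Amx R = 1%:M.
Proof. apply: mx2E; simp => //. Qed.

Lemma invmx_sq (M : 'M[R]_2) : M *m M = 1%:M -> invmx M = M.
Proof.
move=> H; have [U _] := mulmx1_unit H.
by rewrite -[invmx M]mulmx1 -H mulmxA mulVmx // mul1mx.
Qed.

Lemma invA : invmx (Amx R) = Amx R.
Proof. exact: invmx_sq AA. Qed.

Definition Mset (g : aff R) : Prop :=
  g.1 0 0 \is a Num.int /\ g.1 1 0 \is a Num.int /\ (g.2 = 1%:M \/ g.2 = Amx R).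

Lemma Mgrp_Mset g : Mgrp g -> Mset g.
Proof.
elim => {g}.
- rewrite /Mset /aff_id /=; simp; rewrite ?rpred0; split => //; split => //; by left.
- move=> f [->|[->|->]]; rewrite /Mset /=; simp; rewrite ?rpred0 ?rpred1; split => //; split => //; by [left|left|right].
- move=> f g _ [f0 [f1 f2]] _ [g0 [g1 g2]]; rewrite /Mset /aff_comp /=.
  case: f2 => ->; case: g2 => ->; simp; rewrite ?rpredD ?rpredN //; split => //; split => //.
  + by left; rewrite mul1mx.
  + by right; rewrite mul1mx.
  + by right; rewrite mulmx1.
  + by left; rewrite AA.
- move=> f _ [f0 [f1 f2]]; rewrite /Mset /aff_inv /=.
  case: f2 => ->; rewrite ?invmx1 ?invA; simp; rewrite ?rpredD ?rpredN //; split => //; split => //; by [left|right].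
Qed.

Lemma Mg_add v w : Mgrp (v, 1%:M) -> Mgrp (w, 1%:M) -> Mgrp (v + w, 1%:M : 'M[R]_2).
Proof.
move=> hv hw; have := ag_comp hv hw; rewrite /aff_comp /= !mul1mx; exact.
Qed.

Lemma Mg_opp v : Mgrp (v, 1%:M) -> Mgrp (- v, 1%:M : 'M[R]_2).
Proof.
move=> hv; have := ag_inv hv; rewrite /aff_inv /= invmx1 !mul1mx; exact.
Qed.

Lemma Mg_0 : Mgrp (0, 1%:M : 'M[R]_2).
Proof. exact: ag_id. Qed.

Lemma Mg_nat v k : Mgrp (v, 1%:M) -> Mgrp (v *+ k, 1%:M : 'M[R]_2).
Proof.
move=> hv; elim: k => [|k IH]; first by rewrite mulr0n; exact: Mg_0.
by rewrite mulrS; apply: Mg_add.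
Qed.

Lemma Mg_int v (z : int) : Mgrp (v, 1%:M) -> Mgrp (v *~ z, 1%:M : 'M[R]_2).
Proof.
move=> hv; case: z => k; first exact: Mg_nat.
rewrite NegzE mulrNz; apply: Mg_opp; exact: Mg_nat.
Qed.

Lemma Mset_Mgrp g : Mset g -> Mgrp g.
Proof.
case: g => v H [/intrP [m hm] [/intrP [n hn] hH]] /=.
have hv : Mgrp (v, 1%:M).
  have -> : v = e1 R *~ m + e2 R *~ n.
    rewrite -!scaler_int; apply: col2E; simp; rewrite ?hm ?hn //.
  apply: Mg_add; apply: Mg_int; apply: ag_base; rewrite /Mgens; tauto.
case: hH => /= ->; first exact: hv.
have h := ag_comp hv (ag_base (or_intror (or_intror erefl)) : Mgrp (0, Amx R)).
by move: h; rewrite /aff_comp /= mulmx0 addr0 mul1mx.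
Qed.

Lemma compA (f g h : aff R) : aff_comp (aff_comp f g) h = aff_comp f (aff_comp g h).
Proof. by rewrite /aff_comp /= mulmxDr !mulmxA addrA. Qed.

Lemma comp_inv_r (f : aff R) : f.2 \in unitmx -> aff_comp f (aff_inv f) = aff_id R.
Proof. by move=> U; rewrite /aff_comp /aff_inv /= mulmxN mulmxA mulmxV // mul1mx subrr. Qed.

Lemma comp_id_l (f : aff R) : aff_comp (aff_id R) f = f.
Proof. by case: f => v H; rewrite /aff_comp /= add0r !mul1mx. Qed.

Lemma comp_id_r (f : aff R) : aff_comp f (aff_id R) = f.
Proof. by case: f => v H; rewrite /aff_comp /= mulmx0 addr0 mulmx1. Qed.

Lemma inv_inv (f : aff R) : f.2 \in unitmx -> aff_inv (aff_inv f) = f.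
Proof. by case: f => v H U; rewrite /aff_inv /= invmxK mulmxN opprK mulKVmx. Qed.

Lemma conj_conj (f g : aff R) : f.2 \in unitmx -> aff_conj f (aff_conj (aff_inv f) g) = g.
Proof.
move=> U; rewrite /aff_conj inv_inv // !compA comp_inv_r // comp_id_r.
by rewrite -compA comp_inv_r // comp_id_l.
Qed.

Lemma conj_t (b v : 'cV[R]_2) (B : 'M[R]_2) : B \in unitmx -> aff_conj (b, B) (v, 1%:M) = (B *m v, 1%:M).
Proof.
move=> U; rewrite /aff_conj /aff_comp /aff_inv /= mulmx1 mulmxV // mulmxN mulmxA mulmxV //.
by rewrite mul1mx addrAC subrr add0r.
Qed.

Lemma noC1 (B : 'M[R]_2) : B \in unitmx -> B *m Amx R *m invmx B = 1%:M -> False.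
Proof.
move=> U h.
have h1 : B *m Amx R = B by rewrite -(mulmxKV U (B *m Amx R)) h mul1mx.
have h2 : Amx R = 1%:M by rewrite -(mulKmx U (Amx R)) h1 mulVmx.
have := congr1 (fun M : 'M[R]_2 => M 1 1) h2; simp => e; clear - e; lra.
Qed.

Definition Dmx (B : 'M[R]_2) := B 0 1 = 0 /\ B 1 0 = 0 /\ B 0 0 ^+ 2 = 1 /\ B 1 1 ^+ 2 = 1.

Lemma sq1_int (x : R) : x ^+ 2 = 1 -> x \is a Num.int.
Proof. by move/eqP; rewrite sqrf_eq1 => /orP[/eqP->|/eqP->]; rewrite ?rpredN rpred1. Qed.

Lemma D_sq B : Dmx B -> B *m B = 1%:M.
Proof.
move=> [h01 [h10 [h00 h11]]]; apply: mx2E; simp; rewrite ?h01 ?h10; simp; rewrite -?expr2 //.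
Qed.

Lemma D_comm B : Dmx B -> B *m Amx R = Amx R *m B.
Proof.
move=> [h01 [h10 [h00 h11]]]; apply: mx2E; simp; rewrite ?h01 ?h10; simp => //.
Qed.

Lemma gen_D B : mx_gen (@LinGens R) B -> Dmx B.
Proof.
elim => {B}.
- rewrite /Dmx; simp; rewrite expr1n; tauto.
- move=> B [->|->]; rewrite /Dmx; simp; rewrite ?sqrrN expr1n; tauto.
- move=> B C _ [b01 [b10 [b00 b11]]] _ [c01 [c10 [c00 c11]]]; rewrite /Dmx; simp.
  rewrite b01 b10 c01 c10; simp; rewrite !exprMn b00 b11 c00 c11 mulr1; tauto.
- move=> B _ hB; by rewrite invmx_sq // D_sq.
Qed.

Lemma fwd (b : 'cV[R]_2) (B : 'M[R]_2) : Dmx B -> 2 * b 1 0 \is a Num.int ->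
  forall g, Mset g -> Mset (aff_conj (b, B) g).
Proof.
move=> hD hb [v H] [v0 [v1 hH]]; rewrite /= in v0 v1.
have hBB := D_sq B hD.
have hc := D_comm B hD.
have U : B \in unitmx by case: (mulmx1_unit hBB).
have iB : invmx B = B := invmx_sq B hBB.
case: hD => [h01 [h10 [h00 h11]]].
case: hH => /= ->.
- rewrite conj_t // /Mset /=; split; [|split; [| by left]]; simp; rewrite ?h01 ?h10; simp.
  + by rewrite rpredM // sq1_int.
  + by rewrite rpredM // sq1_int.
- rewrite /aff_conj /aff_comp /aff_inv /= iB.
  have e1 : B *m Amx R *m B = Amx R by rewrite hc -mulmxA hBB mulmx1.
  have e2 : (B *m Amx R) *m -(B *m b) = -(Amx R *m b) by rewrite mulmxN mulmxA e1.
  rewrite e1 e2 /Mset /=; split;[|split;[|by right]]; simp; rewrite ?h01 ?h10; simp.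
  + by rewrite addrAC subrr add0r rpredM // sq1_int.
  + have -> : b 1 0 + B 1 1 * v 1 0 + b 1 0 = B 1 1 * v 1 0 + 2 * b 1 0 by ring.
    by rewrite rpredD // rpredM // sq1_int.
Qed.

Lemma prod1 (x y : R) : x \is a Num.int -> y \is a Num.int -> x * y = 1 -> x ^+ 2 = 1.
Proof.
move=> hx hy e.
have x0 : x != 0 by apply/eqP => x0; move: e; rewrite x0 mul0r => e; clear -e; lra.
have y0 : y != 0 by apply/eqP => y0; move: e; rewrite y0 mulr0 => e; clear -e; lra.
have := sqr_intr_ge1 hx x0; have := sqr_intr_ge1 hy y0.
clear -e; move=> *; nra.
Qed.

Lemma diag_gen (B : 'M[R]_2) : B 0 1 = 0 -> B 1 0 = 0 -> B 0 0 ^+ 2 = 1 -> B 1 1 ^+ 2 = 1 ->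
  mx_gen (@LinGens R) B.
Proof.
move=> h01 h10 /eqP s0 /eqP s1.
move: s0 s1; rewrite !sqrf_eq1 => /orP[/eqP s0|/eqP s0] /orP[/eqP s1|/eqP s1].
- have -> : B = 1%:M by apply: mx2E; simp; rewrite ?s0 ?s1 ?h01 ?h10.
  exact: mg_id.
- have -> : B = Amx R by apply: mx2E; simp; rewrite ?s0 ?s1 ?h01 ?h10.
  by apply: mg_base; right.
- have -> : B = - 1%:M *m Amx R by apply: mx2E; simp; rewrite ?s0 ?s1 ?h01 ?h10 ?oppr0 ?mul0r ?mulr0.
  by apply: mg_mul; apply: mg_base; [left|right].
- have -> : B = - 1%:M by apply: mx2E; simp; rewrite ?s0 ?s1 ?h01 ?h10 ?oppr0 ?mul0r ?mulr0.
  by apply: mg_base; left.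
Qed.
End S.
Ltac simp := try unfold e1; try unfold e2; try unfold Amx;
  rewrite ?(mulE, mxE) ?ordE /= ?mulr1n ?mulr0n ?mulr1 ?mulr0 ?mul1r ?mul0r ?addr0 ?add0r ?mulN1r ?mulNr ?mulrN ?opprK ?oppr0.

Arguments Mgrp_Mset {R g}.
Arguments Mset_Mgrp {R g}.
Arguments noC1 {R B}.
Arguments prod1 {R x y}.
Arguments gen_D {R B}.
Arguments D_sq {R B}.
Arguments invmx_sq {R M}.
Arguments fwd {R b B}.
Arguments conj_t {R b v B}.
Arguments conj_conj {R f g}.

Theorem lemma17 (R : realType) (b : 'cV[R]_2) (B : 'M[R]_2) :
  in_normalizer (@Mgrp R) (b, B) <->
  (B \in unitmx /\ (exists z : int, 2 * b 1 0 = z%:~R) /\ mx_gen (@LinGens R) B).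
Proof.
split.
- move=> [U [Fw Bw]]; rewrite /is_affine /= in U.
  have hA := Mgrp_Mset (Fw _ (ag_base (or_intror (or_intror erefl)) : Mgrp (0, Amx R))).
  move: hA; rewrite /Mset /aff_conj /aff_comp /aff_inv /= mulmx0 addr0 mulmxN mulmxA.
  move=> [t0 [t1 [hC|hC]]]; first by exfalso; apply: (noC1 U hC).
  rewrite hC in t0 t1.
  have hc : B *m Amx R = Amx R *m B by rewrite -[B *m Amx R](mulmxKV U) hC.
  have h01 : B 0 1 = 0.
    have := congr1 (fun M : 'M[R]_2 => M 0 1) hc; simp => e; clear -e; lra.
  have h10 : B 1 0 = 0.
    have := congr1 (fun M : 'M[R]_2 => M 1 0) hc; simp => e; clear -e; lra.
  have he1 := Mgrp_Mset (Fw _ (ag_base (or_introl erefl) : Mgrp (e1 R, 1%:M))).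
  have he2 := Mgrp_Mset (Fw _ (ag_base (or_intror (or_introl erefl)) : Mgrp (e2 R, 1%:M))).
  rewrite conj_t // /Mset /= in he1; rewrite conj_t // /Mset /= in he2.
  case: he1 => i00 _; case: he2 => _ [i11 _].
  move: i00 i11; simp; rewrite ?h01 ?h10; simp => i00 i11.
  have [h [hh heq]] := Bw _ (ag_base (or_introl erefl) : Mgrp (e1 R, 1%:M)).
  have [h' [hh' heq']] := Bw _ (ag_base (or_intror (or_introl erefl)) : Mgrp (e2 R, 1%:M)).
  case: h hh heq => v H /Mgrp_Mset [v0 [v1 hH]] heq; rewrite /= in v0 v1.
  case: h' hh' heq' => v' H' /Mgrp_Mset [v0' [v1' hH']] heq'; rewrite /= in v0' v1'.
  case: hH => /= hH; subst H; last first.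
    exfalso; apply: (noC1 U); have := congr1 snd heq; rewrite /aff_conj /aff_comp /aff_inv /=.
    by move=> <-.
  case: hH' => /= hH'; subst H'; last first.
    exfalso; apply: (noC1 U); have := congr1 snd heq'; rewrite /aff_conj /aff_comp /aff_inv /=.
    by move=> <-.
  rewrite conj_t // in heq; rewrite conj_t // in heq'.
  case: heq => ev; case: heq' => ev'.
  have s0 : B 0 0 ^+ 2 = 1.
    apply: (prod1 i00 v0); have := congr1 (fun M : 'cV[R]_2 => M 0 0) ev; simp; rewrite ?h01; simp.
    by move=> ->.
  have s1 : B 1 1 ^+ 2 = 1.
    apply: (prod1 i11 v1'); have := congr1 (fun M : 'cV[R]_2 => M 1 0) ev'; simp; rewrite ?h10; simp.
    by move=> ->.
  split; first exact: U.
  split; last exact: diag_gen.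
  move: t1; simp => /intrP [z hz]; exists z; rewrite -hz; ring.
- move=> [U [[z hz] hB]].
  have hD := gen_D hB.
  have hBB := D_sq hD.
  have iB : invmx B = B := invmx_sq hBB.
  have hb : 2 * b 1 0 \is a Num.int by rewrite hz intr_int.
  split; first exact: U.
  split.
  + move=> g hg; apply: Mset_Mgrp; exact: fwd hD hb g (Mgrp_Mset hg).
  + move=> g hg; exists (aff_conj (aff_inv (b, B)) g); split; last by rewrite conj_conj.
    apply: Mset_Mgrp; rewrite /aff_inv /= iB; apply: fwd; [exact: hD| |exact: Mgrp_Mset hg].
    case: hD => [h01 [h10 [h00 h11]]].
    simp; rewrite ?h10; simp.
    have -> : 2 * (B 1 1 * b 1 0) = B 1 1 * (2 * b 1 0) by ring.
    by rewrite rpredN rpredM // sq1_int.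
Qed.
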